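(* (a) There is a multi-valued function $F: \mathcal{C} \Rightarrow \mathcal{N}$ such that $F(x)$ is closed in $\mathcal{N}$ for every $x \in \mathcal{C}$, the graph of $F$ is a Borel subset of $\mathcal{C}\times\mathcal{N}$, and the set of points of continuity of $F$ is analytic and not Borel. (b) There is a multi-valued function $F: [0,1] \Rightarrow [0,1]$ whose graph is a Borel subset of $[0,1]\times[0,1]$ and whose set of points of continuity is analytic and not Borel.
   Context: $\mathcal{N}=\omega^\omega$ is the Baire space with the product topology (of discrete $\omega$), metrized by $d(\alpha,\beta) = 1/(\min\{n: \alpha(n)\ne\beta(n)\}+1)$ for $\alpha\neq\beta$; $\mathcal{C}=2^\omega\subseteq\mathcal{N}$ is the Cantor space with the induced metric. A multi-valued function $F: X \Rightarrow Y$ assigns to each $x$ a nonempty set $F(x)\subseteq Y$; its graph is $\{(x,y): y\in F(x)\}$. $F$ is continuous at $x$ if there is some $y \in F(x)$ such that for every $\varepsilon>0$ there is $\delta>0$ such that for every $x' \in B_p(x,\delta)$ there is $y' \in F(x')$ with $d(y,y')<\varepsilon$. A subset of a complete separable metric space is analytic if it is a continuous image of a closed subset of a complete separable metric space. *)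

(* Defs.v *)
From Stdlib Require Import Reals Lra ClassicalEpsilon.
Open Scope R_scope.

Section MetricNotions.
Context {X : Type} (d : X -> X -> R).

Definition is_metric : Prop :=
  (forall x y, 0 <= d x y) /\
  (forall x y, d x y = 0 <-> x = y) /\
  (forall x y, d x y = d y x) /\
  (forall x y z, d x z <= d x y + d y z).

Definition open_in (U : X -> Prop) : Prop :=
  forall x, U x -> exists r, 0 < r /\ forall y, d x y < r -> U y.

Definition closed_in (A : X -> Prop) : Prop :=
  open_in (fun x => ~ A x).

Definition borel (A : X -> Prop) : Prop :=
  forall S : (X -> Prop) -> Prop,
    (forall U, open_in U -> S U) ->
    (forall B, S B -> S (fun x => ~ B x)) ->
    (forall B : nat -> X -> Prop, (forall n, S (B n)) -> S (fun x => exists n, B n x)) ->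
    S A.

Definition cauchy_seq (u : nat -> X) : Prop :=
  forall eps, 0 < eps -> exists N, forall m n, (N <= m)%nat -> (N <= n)%nat -> d (u m) (u n) < eps.

Definition seq_converges (u : nat -> X) (l : X) : Prop :=
  forall eps, 0 < eps -> exists N, forall n, (N <= n)%nat -> d (u n) l < eps.

Definition complete_metric : Prop :=
  forall u, cauchy_seq u -> exists l, seq_converges u l.

(** separable: a countable (possibly empty) dense subset *)
Definition separable_metric : Prop :=
  exists s : nat -> option X,
    forall x eps, 0 < eps -> exists n y, s n = Some y /\ d x y < eps.

End MetricNotions.

Definition metric_continuous {P X : Type} (dP : P -> P -> R) (dX : X -> X -> R)
  (f : P -> X) : Prop :=
  forall x eps, 0 < eps -> exists delta, 0 < delta /\
    forall x', dP x x' < delta -> dX (f x) (f x') < eps.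

Definition analytic {X : Type} (dX : X -> X -> R) (A : X -> Prop) : Prop :=
  exists (P : Type) (dP : P -> P -> R),
    is_metric dP /\ complete_metric dP /\ separable_metric dP /\
    exists (C : P -> Prop) (f : P -> X),
      closed_in dP C /\ metric_continuous dP dX f /\
      forall x, A x <-> exists p, C p /\ f p = x.

(** Product (max) metric; it induces the product topology. *)
Definition prod_dist {X Y : Type} (dX : X -> X -> R) (dY : Y -> Y -> R)
  (p q : X * Y) : R := Rmax (dX (fst p) (fst q)) (dY (snd p) (snd q)).

Definition multi_valued {X Y : Type} (F : X -> Y -> Prop) : Prop :=
  forall x, exists y, F x y.

Definition mv_graph {X Y : Type} (F : X -> Y -> Prop) (p : X * Y) : Prop :=
  F (fst p) (snd p).

Definition mv_continuous_at {X Y : Type} (dX : X -> X -> R) (dY : Y -> Y -> R)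
  (F : X -> Y -> Prop) (x : X) : Prop :=
  exists y, F x y /\
    forall eps, 0 < eps -> exists delta, 0 < delta /\
      forall x', dX x x' < delta -> exists y', F x' y' /\ dY y y' < eps.

Definition mv_continuity_points {X Y : Type} (dX : X -> X -> R) (dY : Y -> Y -> R)
  (F : X -> Y -> Prop) : X -> Prop := mv_continuous_at dX dY F.

Definition baire := nat -> nat.

Definition baire_dist (a b : baire) : R :=
  match excluded_middle_informative (a = b) with
  | left _ => 0
  | right _ =>
      / (INR (epsilon (inhabits 0%nat)
                (fun n => a n <> b n /\ forall m, (m < n)%nat -> a m = b m)) + 1)
  end.

Definition cantor := { a : baire | forall n, (a n <= 1)%nat }.

Definition cantor_dist (a b : cantor) : R := baire_dist (proj1_sig a) (proj1_sig b).

Definition unit_interval := { x : R | 0 <= x <= 1 }.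

Definition ui_dist (x y : unit_interval) : R := Rabs (proj1_sig x - proj1_sig y).

(* Main.v *)
Require Import Defs.
From Stdlib Require Import Arith Reals Lra Lia ZArith ClassicalEpsilon Classical ProofIrrelevance FunctionalExtensionality PropExtensionality Cantor.
Open Scope R_scope.


Definition agree (a b : nat -> nat) (n : nat) : Prop := forall i, (i < n)%nat -> a i = b i.

Lemma agree_refl a n : agree a a n.
Proof. intros i _; reflexivity. Qed.
Lemma agree_sym a b n : agree a b n -> agree b a n.
Proof. intros H i Hi; symmetry; auto. Qed.
Lemma agree_trans a b c n : agree a b n -> agree b c n -> agree a c n.
Proof. intros H1 H2 i Hi; rewrite H1; auto. Qed.
Lemma agree_le a b n m : agree a b n -> (m <= n)%nat -> agree a b m.
Proof. intros H Hm i Hi; apply H; lia. Qed.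

Definition least_diff (a b : baire) (n : nat) : Prop :=
  a n <> b n /\ forall m, (m < n)%nat -> a m = b m.

Lemma least_diff_ex (a b : baire) : a <> b -> exists n, least_diff a b n.
Proof.
  intro H.
  assert (H0 : exists n, a n <> b n).
  { apply not_all_ex_not. intro H'. apply H. apply functional_extensionality. exact H'. }
  destruct H0 as [n Hn]. revert Hn.
  pattern n; apply (well_founded_ind Wf_nat.lt_wf); clear n.
  intros n IH Hn.
  destruct (classic (exists m, (m < n)%nat /\ a m <> b m)) as [[m [Hm1 Hm2]]|Hno].
  - exact (IH m Hm1 Hm2).
  - exists n. split; auto. intros m Hm. apply NNPP. intro. apply Hno. eauto.
Qed.

Lemma least_diff_unique a b n n' : least_diff a b n -> least_diff a b n' -> n = n'.
Proof.
  intros [H1 H2] [H1' H2'].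
  destruct (Nat.lt_total n n') as [h|[h|h]]; auto.
  - exfalso; apply H1; auto.
  - exfalso; apply H1'; auto.
Qed.

Lemma least_diff_sym a b n : least_diff a b n -> least_diff b a n.
Proof. intros [H1 H2]; split; auto. intros m Hm; symmetry; auto. Qed.

Lemma bd_spec (a b : baire) : a <> b ->
  exists n, least_diff a b n /\ baire_dist a b = / (INR n + 1).
Proof.
  intro H. unfold baire_dist.
  destruct (excluded_middle_informative (a = b)) as [e|ne]; [contradiction|].
  set (P := fun n => a n <> b n /\ (forall m, (m < n)%nat -> a m = b m)).
  assert (Hex : exists n, P n) by (apply least_diff_ex; auto).
  pose proof (epsilon_spec (inhabits 0%nat) P Hex) as Hs.
  exists (epsilon (inhabits 0%nat) P). split; [exact Hs|reflexivity].
Qed.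

Lemma bd_self a : baire_dist a a = 0.
Proof. unfold baire_dist. destruct (excluded_middle_informative (a = a)); [auto|congruence]. Qed.

Lemma inr1_pos n : 0 < INR n + 1.
Proof. pose proof (pos_INR n); lra. Qed.

Lemma inv_pos n : 0 < / (INR n + 1).
Proof. apply Rinv_0_lt_compat, inr1_pos. Qed.

Lemma inv_le n N : (N <= n)%nat -> / (INR n + 1) <= / (INR N + 1).
Proof. intro h. apply Rinv_le_contravar. apply inr1_pos. apply le_INR in h; lra. Qed.

Lemma inv_lt_rev n N : / (INR n + 1) < / (INR N + 1) -> (N < n)%nat.
Proof.
  intro h. destruct (le_lt_dec n N) as [h'|h']; auto.
  apply inv_le in h'. lra.
Qed.

Lemma bd_nonneg a b : 0 <= baire_dist a b.
Proof.
  destruct (classic (a = b)) as [e|ne].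
  - subst; rewrite bd_self; lra.
  - destruct (bd_spec a b ne) as [n [_ ->]]. left; apply inv_pos.
Qed.

Lemma bd_agree a b N : agree a b N -> baire_dist a b <= / (INR N + 1).
Proof.
  intro H. destruct (classic (a = b)) as [e|ne].
  - subst; rewrite bd_self; left; apply inv_pos.
  - destruct (bd_spec a b ne) as [n [[Hn1 Hn2] ->]].
    apply inv_le. destruct (le_lt_dec N n); auto. exfalso; apply Hn1; auto.
Qed.

Lemma bd_small a b N : baire_dist a b < / (INR N + 1) -> agree a b (S N).
Proof.
  intro H. destruct (classic (a = b)) as [e|ne].
  - subst; apply agree_refl.
  - destruct (bd_spec a b ne) as [n [[Hn1 Hn2] Hd]]. rewrite Hd in H.
    apply inv_lt_rev in H. intros i Hi; apply Hn2; lia.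
Qed.

Lemma bd_small' a b N : baire_dist a b < / (INR N + 1) -> agree a b N.
Proof. intro H; apply bd_small in H; eapply agree_le; eauto. Qed.

Lemma arch_inv eps : 0 < eps -> exists N, / (INR N + 1) < eps.
Proof.
  intro h. destruct (archimed_cor1 eps h) as [N [H1 H2]]. exists N.
  eapply Rle_lt_trans; [|exact H1]. apply Rinv_le_contravar.
  apply lt_0_INR; auto. lra.
Qed.

Lemma bd_sym a b : baire_dist a b = baire_dist b a.
Proof.
  destruct (classic (a = b)) as [e|ne].
  - subst; auto.
  - assert (ne' : b <> a) by auto.
    destruct (bd_spec a b ne) as [n [Hn ->]].
    destruct (bd_spec b a ne') as [n' [Hn' ->]].
    apply least_diff_sym in Hn'. rewrite (least_diff_unique _ _ _ _ Hn Hn'); auto.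
Qed.

Lemma bd_zero a b : baire_dist a b = 0 <-> a = b.
Proof.
  split; intro H.
  - destruct (classic (a = b)) as [e|ne]; auto.
    destruct (bd_spec a b ne) as [n [_ Hd]]. pose proof (inv_pos n); lra.
  - subst; apply bd_self.
Qed.

Lemma bd_tri a b c : baire_dist a c <= baire_dist a b + baire_dist b c.
Proof.
  pose proof (bd_nonneg a b); pose proof (bd_nonneg b c).
  destruct (classic (a = c)) as [e|nac].
  - subst; rewrite bd_self; lra.
  - destruct (classic (a = b)) as [e|nab]. { subst; lra. }
    destruct (classic (b = c)) as [e|nbc]. { subst; lra. }
    destruct (bd_spec a c nac) as [n [[Hn1 Hn2] ->]].
    destruct (bd_spec a b nab) as [n1 [[H11 H12] E1]].
    destruct (bd_spec b c nbc) as [n2 [[H21 H22] E2]].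
    destruct (le_lt_dec n1 n2) as [h|h].
    + assert (n1 <= n)%nat.
      { destruct (le_lt_dec n1 n); auto. exfalso. apply Hn1. rewrite H12 by lia. apply H22; lia. }
      pose proof (inv_le _ _ H1). rewrite E1; lra.
    + assert (n2 <= n)%nat.
      { destruct (le_lt_dec n2 n); auto. exfalso. apply Hn1. rewrite H12 by lia. apply H22; lia. }
      pose proof (inv_le _ _ H1). rewrite E2; lra.
Qed.

Lemma baire_metric : is_metric baire_dist.
Proof.
  split; [exact bd_nonneg|split; [exact bd_zero|split; [exact bd_sym|exact bd_tri]]].
Qed.

Definition cv (x : cantor) : baire := proj1_sig x.

Lemma cv_inj (x y : cantor) : cv x = cv y -> x = y.
Proof.
  destruct x as [x hx], y as [y hy]; unfold cv; simpl; intro e; subst.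
  f_equal; apply proof_irrelevance.
Qed.

Lemma cantor_metric : is_metric cantor_dist.
Proof.
  unfold cantor_dist. split; [|split; [|split]].
  - intros; apply bd_nonneg.
  - intros x y; rewrite bd_zero; split; [apply cv_inj|intros ->; auto].
  - intros; apply bd_sym.
  - intros; apply bd_tri.
Qed.

Lemma ui_inj (x y : unit_interval) : proj1_sig x = proj1_sig y -> x = y.
Proof.
  destruct x as [x hx], y as [y hy]; simpl; intro e; subst.
  f_equal; apply proof_irrelevance.
Qed.

Lemma ui_metric : is_metric ui_dist.
Proof.
  unfold ui_dist. split; [|split; [|split]].
  - intros; apply Rabs_pos.
  - intros x y; split.
    + intro h. apply ui_inj. destruct (Req_dec (proj1_sig x) (proj1_sig y)); auto.
      exfalso. assert (proj1_sig x - proj1_sig y <> 0) by lra. apply Rabs_no_R0 in H0; auto.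
    + intros ->. replace (proj1_sig y - proj1_sig y) with 0 by ring. apply Rabs_R0.
  - intros; apply Rabs_minus_sym.
  - intros x y z. replace (proj1_sig x - proj1_sig z) with ((proj1_sig x - proj1_sig y) + (proj1_sig y - proj1_sig z)) by ring.
    apply Rabs_triang.
Qed.

Lemma prod_metric {X Y} (dX : X -> X -> R) (dY : Y -> Y -> R) :
  is_metric dX -> is_metric dY -> is_metric (prod_dist dX dY).
Proof.
  intros [a1 [a2 [a3 a4]]] [b1 [b2 [b3 b4]]]; unfold prod_dist.
  split; [|split; [|split]].
  - intros p q. pose proof (a1 (fst p) (fst q)). eapply Rle_trans; [exact H|apply Rmax_l].
  - intros [p1 p2] [q1 q2]; simpl. split.
    + intro h. pose proof (a1 p1 q1). pose proof (b1 p2 q2).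
      pose proof (Rmax_l (dX p1 q1) (dY p2 q2)). pose proof (Rmax_r (dX p1 q1) (dY p2 q2)).
      assert (dX p1 q1 = 0) by lra. assert (dY p2 q2 = 0) by lra.
      apply a2 in H3; apply b2 in H4; subst; auto.
    + intro h; inversion h; subst. rewrite (proj2 (a2 q1 q1) eq_refl), (proj2 (b2 q2 q2) eq_refl).
      apply Rmax_left; lra.
  - intros; rewrite a3, b3; auto.
  - intros p q r. apply Rmax_lub.
    + eapply Rle_trans; [apply a4|]. apply Rplus_le_compat; apply Rmax_l.
    + eapply Rle_trans; [apply b4|]. apply Rplus_le_compat; apply Rmax_r.
Qed.


Section BorelTools.
Context {X : Type} (d : X -> X -> R).

Lemma borel_ext (A B : X -> Prop) : borel d A -> (forall x, A x <-> B x) -> borel d B.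
Proof.
  intros H E. replace B with A; auto.
  apply functional_extensionality; intro x; apply propositional_extensionality; auto.
Qed.

Lemma borel_open U : open_in d U -> borel d U.
Proof. intros H S H1 H2 H3; auto. Qed.

Lemma borel_compl A : borel d A -> borel d (fun x => ~ A x).
Proof. intros H S H1 H2 H3; apply H2; apply H; auto. Qed.

Lemma borel_union (A : nat -> X -> Prop) : (forall n, borel d (A n)) -> borel d (fun x => exists n, A n x).
Proof. intros H S H1 H2 H3; apply H3; intro n; apply H; auto. Qed.

Lemma borel_inter (A : nat -> X -> Prop) : (forall n, borel d (A n)) -> borel d (fun x => forall n, A n x).
Proof.
  intro H. apply borel_ext with (fun x => ~ exists n, ~ A n x).
  - apply borel_compl, borel_union; intro n; apply borel_compl; auto.
  - intro x; split.
    + intros h n; apply NNPP; intro h'; apply h; eauto.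
    + intros h [n hn]; auto.
Qed.

Lemma borel_union2 A B : borel d A -> borel d B -> borel d (fun x => A x \/ B x).
Proof.
  intros HA HB. apply borel_ext with (fun x => exists n, (if Nat.eqb n 0 then A else B) x).
  - apply borel_union; intro n; destruct (Nat.eqb n 0); auto.
  - intro x; split.
    + intros [n hn]; destruct (Nat.eqb n 0); auto.
    + intros [h|h]; [exists 0%nat|exists 1%nat]; auto.
Qed.

Lemma borel_inter2 A B : borel d A -> borel d B -> borel d (fun x => A x /\ B x).
Proof.
  intros HA HB. apply borel_ext with (fun x => ~ (~ A x \/ ~ B x)).
  - apply borel_compl, borel_union2; apply borel_compl; auto.
  - intro x; tauto.
Qed.

Lemma borel_closed A : closed_in d A -> borel d A.
Proof.
  intro H. apply borel_ext with (fun x => ~ ~ A x).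
  - apply borel_compl, borel_open; auto.
  - intro x; tauto.
Qed.

Lemma borel_full : borel d (fun _ => True).
Proof. apply borel_open. intros x _. exists 1; split; [lra|auto]. Qed.

End BorelTools.

Lemma borel_preimage {Z W : Type} (dZ : Z -> Z -> R) (dW : W -> W -> R)
  (Dom : Z -> Prop) (phi : Z -> W) :
  is_metric dZ -> borel dZ Dom ->
  (forall z, Dom z -> forall eps, 0 < eps -> exists del, 0 < del /\
      forall z', Dom z' -> dZ z z' < del -> dW (phi z) (phi z') < eps) ->
  forall B, borel dW B -> borel dZ (fun z => Dom z /\ B (phi z)).
Proof.
  intros [m1 [m2 [m3 m4]]] HD Hc B HB.
  apply HB with (S := fun B => borel dZ (fun z => Dom z /\ B (phi z))).
  - intros U HU.
    set (V := fun z => exists z0 r, 0 < r /\ Dom z0 /\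
                 (forall q, Dom q -> dZ z0 q < 2 * r -> U (phi q)) /\ dZ z0 z < r).
    apply borel_ext with (fun z => Dom z /\ V z).
    + apply borel_inter2; auto. apply borel_open.
      intros z [z0 [r [h1 [h2 [h3 h4]]]]]. exists (r - dZ z0 z). split; [lra|].
      intros y hy. exists z0, r. repeat split; auto.
      pose proof (m4 z0 z y). lra.
    + intro z; split.
      * intros [hD [z0 [r [h1 [h2 [h3 h4]]]]]]. split; auto. apply h3; auto; lra.
      * intros [hD hU]. split; auto.
        destruct (HU _ hU) as [rho [hr hb]].
        destruct (Hc z hD rho hr) as [del [hdel hz]].
        exists z, (del / 2). repeat split; auto; try lra.
        -- intros q hq hq'. apply hb. apply hz; auto; lra.
        -- rewrite (proj2 (m2 z z) eq_refl). lra.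
  - intros B0 HB0.
    apply borel_ext with (fun z => Dom z /\ ~ (Dom z /\ B0 (phi z))).
    + apply borel_inter2; auto. apply borel_compl; auto.
    + intro z; tauto.
  - intros Bn HBn.
    apply borel_ext with (fun z => exists n, Dom z /\ Bn n (phi z)).
    + apply borel_union; auto.
    + intro z; split.
      * intros [n [h1 h2]]; split; eauto.
      * intros [h1 [n h2]]; eauto.
Qed.

Lemma borel_preimage_total {Z W : Type} (dZ : Z -> Z -> R) (dW : W -> W -> R) (phi : Z -> W) :
  is_metric dZ -> metric_continuous dZ dW phi ->
  forall B, borel dW B -> borel dZ (fun z => B (phi z)).
Proof.
  intros Hm Hc B HB.
  apply borel_ext with (fun z => True /\ B (phi z)); [|intro; tauto].
  apply (borel_preimage dZ dW); auto. apply borel_full.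
  intros z _ eps he. destruct (Hc z eps he) as [del [h1 h2]]. exists del; split; auto.
Qed.


Lemma fchoice {A B : Type} (P : A -> B -> Prop) : (forall a, exists b, P a b) -> exists f, forall a, P a (f a).
Proof.
  intro H. exists (fun a => proj1_sig (constructive_indefinite_description _ (H a))).
  intro a. exact (proj2_sig (constructive_indefinite_description _ (H a))).
Qed.

Definition pr (m k : nat) : nat := Cantor.to_nat (m, k).
Definition p1 (i : nat) : nat := fst (Cantor.of_nat i).
Definition p2 (i : nat) : nat := snd (Cantor.of_nat i).
Lemma p1_pr m k : p1 (pr m k) = m.
Proof. unfold p1, pr; rewrite Cantor.cancel_of_to; auto. Qed.
Lemma p2_pr m k : p2 (pr m k) = k.
Proof. unfold p2, pr; rewrite Cantor.cancel_of_to; auto. Qed.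
Lemma pr_ge m k : (m <= pr m k)%nat.
Proof. unfold pr. pose proof (Cantor.to_nat_non_decreasing m k). lia. Qed.
Lemma pr_ge2 m k : (k <= pr m k)%nat.
Proof. unfold pr. pose proof (Cantor.to_nat_non_decreasing m k). lia. Qed.
Lemma p1_le i : (p1 i <= i)%nat.
Proof.
  unfold p1. pose proof (Cantor.cancel_to_of i) as E.
  destruct (Cantor.of_nat i) as [u v]; simpl.
  pose proof (Cantor.to_nat_non_decreasing u v); lia.
Qed.
Lemma pr_p i : pr (p1 i) (p2 i) = i.
Proof. unfold pr, p1, p2. rewrite <- surjective_pairing. apply Cantor.cancel_to_of. Qed.

Definition el (i c : nat) : nat := p1 (Nat.iter i p2 c).
Fixpoint enc (a : nat -> nat) (N : nat) : nat :=
  match N with 0 => 0%nat | S N' => pr (a 0%nat) (enc (fun i => a (S i)) N') end.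

Lemma el_enc N : forall a i, (i < N)%nat -> el i (enc a N) = a i.
Proof.
  induction N as [|N IH]; intros a i hi; [lia|].
  destruct i as [|i].
  - unfold el; simpl. apply p1_pr.
  - unfold el. rewrite Nat.iter_succ_r. simpl. rewrite p2_pr.
    apply (IH (fun j => a (S j)) i). lia.
Qed.

Definition bn (k : nat) := p1 k.
Definition bca (k : nat) := p1 (p2 k).
Definition bcb (k : nat) := p2 (p2 k).
Definition matches (k : nat) (x b : nat -> nat) : Prop :=
  forall i, (i < bn k)%nat -> x i = el i (bca k) /\ b i = el i (bcb k).
Definition code (n : nat) (x b : nat -> nat) : nat := pr n (pr (enc x n) (enc b n)).

Lemma matches_code n x b x' b' : matches (code n x b) x' b' <-> agree x x' n /\ agree b b' n.
Proof.
  unfold matches, code, bn, bca, bcb. rewrite p1_pr, p2_pr, p1_pr, p2_pr.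
  split.
  - intro h; split; intros i hi; destruct (h i hi) as [h1 h2];
      [rewrite h1|rewrite h2]; rewrite el_enc; auto.
  - intros [h1 h2] i hi. rewrite !el_enc; auto. split; symmetry; auto.
Qed.

Lemma matches_prefix k x b x' b' : matches k x b -> agree x x' (bn k) -> agree b b' (bn k) -> matches k x' b'.
Proof.
  intros h h1 h2 i hi. destruct (h i hi). rewrite <- h1, <- h2; auto.
Qed.

Definition closedQ (Q : cantor -> baire -> Prop) : Prop :=
  forall x b, ~ Q x b -> exists N, forall x' b', agree (cv x) (cv x') N -> agree b b' N -> ~ Q x' b'.

Definition SigmaC (A : cantor -> Prop) : Prop :=
  exists Q, closedQ Q /\ forall x, A x <-> exists b, Q x b.

Lemma SigmaC_ext A B : SigmaC A -> (forall x, A x <-> B x) -> SigmaC B.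
Proof.
  intros [Q [h1 h2]] E. exists Q; split; auto. intro x; rewrite <- E; auto.
Qed.

Definition tl (b : baire) : baire := fun i => b (S i).
Definition bcons (n : nat) (b : baire) : baire := fun i => match i with 0%nat => n | S j => b j end.

Lemma SigmaC_union (A : nat -> cantor -> Prop) : (forall n, SigmaC (A n)) -> SigmaC (fun x => exists n, A n x).
Proof.
  intro H. destruct (fchoice _ H) as [Qf HQ].
  exists (fun x b => Qf (b 0%nat) x (tl b)). split.
  - intros x b hn. destruct (proj1 (HQ (b 0%nat)) x (tl b) hn) as [N hN].
    exists (S N). intros x' b' h1 h2.
    assert (e0 : b' 0%nat = b 0%nat) by (symmetry; apply h2; lia). rewrite e0.
    apply hN. eapply agree_le; eauto. intros i hi; apply h2; lia.
  - intro x; split.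
    + intros [n hn]. apply (proj2 (HQ n)) in hn. destruct hn as [b hb].
      exists (bcons n b). exact hb.
    + intros [b hb]. exists (b 0%nat). apply (proj2 (HQ (b 0%nat))). eauto.
Qed.

Fixpoint bnd (n N : nat) : nat :=
  match N with 0%nat => 0%nat | S N' => Nat.max (bnd n N') (S (pr n N')) end.
Lemma bnd_spec n N m : (m < N)%nat -> (pr n m < bnd n N)%nat.
Proof.
  induction N as [|N IH]; intro h; [lia|]. simpl.
  destruct (Nat.eq_dec m N) as [->|ne]; [lia|]. specialize (IH ltac:(lia)); lia.
Qed.

Lemma SigmaC_inter (A : nat -> cantor -> Prop) : (forall n, SigmaC (A n)) -> SigmaC (fun x => forall n, A n x).
Proof.
  intro H. destruct (fchoice _ H) as [Qf HQ].
  exists (fun x b => forall n, Qf n x (fun m => b (pr n m))). split.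
  - intros x b hn. apply not_all_ex_not in hn. destruct hn as [n hn].
    destruct (proj1 (HQ n) x _ hn) as [N hN].
    exists (N + bnd n N)%nat. intros x' b' h1 h2 hq. apply (hN x' (fun m => b' (pr n m))).
    + eapply agree_le; eauto; lia.
    + intros i hi. apply h2. pose proof (bnd_spec n N i hi). lia.
    + apply hq.
  - intro x; split.
    + intro hA. assert (hb : forall n, exists b, Qf n x b) by (intro n; apply (proj2 (HQ n)); auto).
      destruct (fchoice _ hb) as [bs hbs].
      exists (fun k => bs (p1 k) (p2 k)). intro n.
      replace (fun m => bs (p1 (pr n m)) (p2 (pr n m))) with (bs n); auto.
      apply functional_extensionality; intro m; rewrite p1_pr, p2_pr; auto.
    + intros [b hb] n. apply (proj2 (HQ n)). eauto.
Qed.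

Lemma open_cantor_agree U : open_in cantor_dist U ->
  forall x, U x -> exists N, forall x', agree (cv x) (cv x') N -> U x'.
Proof.
  intros H x hx. destruct (H x hx) as [r [hr hU]]. destruct (arch_inv r hr) as [N hN].
  exists N. intros x' ha. apply hU. unfold cantor_dist. pose proof (bd_agree _ _ _ ha).
  fold (cv x) (cv x'). lra.
Qed.

Lemma SigmaC_open U : open_in cantor_dist U -> SigmaC U.
Proof.
  intro H. exists (fun x b => forall x', agree (cv x) (cv x') (b 0%nat) -> U x'). split.
  - intros x b hn. apply not_all_ex_not in hn. destruct hn as [x0 hx0].
    exists (S (b 0%nat)). intros x' b' h1 h2 hq.
    assert (e0 : b' 0%nat = b 0%nat) by (symmetry; apply h2; lia).
    apply hx0. intro ha. apply hq. rewrite e0.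
    apply agree_trans with (cv x). apply agree_sym; eapply agree_le; eauto. auto.
  - intro x; split.
    + intro hx. destruct (open_cantor_agree U H x hx) as [N hN]. exists (fun _ => N). auto.
    + intros [b hb]. apply hb. apply agree_refl.
Qed.

Lemma SigmaC_open_compl U : open_in cantor_dist U -> SigmaC (fun x => ~ U x).
Proof.
  intro H. exists (fun x (b : baire) => forall N, exists x', agree (cv x) (cv x') N /\ ~ U x'). split.
  - intros x b hn. apply not_all_ex_not in hn. destruct hn as [N hN].
    exists N. intros x' b' h1 h2 hq. apply hN. destruct (hq N) as [x2 [h3 h4]].
    exists x2; split; auto. eapply agree_trans; eauto.
  - intro x; split.
    + intro hx. exists (fun _ => 0%nat). intro N. exists x; split; auto. apply agree_refl.
    + intros [b hb] hU. destruct (open_cantor_agree U H x hU) as [N hN].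
      destruct (hb N) as [x' [h1 h2]]. auto.
Qed.

Lemma borel_Delta A : borel cantor_dist A -> SigmaC A /\ SigmaC (fun x => ~ A x).
Proof.
  intro H. apply H with (S := fun B => SigmaC B /\ SigmaC (fun x => ~ B x)).
  - intros U hU; split; [apply SigmaC_open|apply SigmaC_open_compl]; auto.
  - intros B [h1 h2]; split; auto. apply SigmaC_ext with B; auto. intro x; tauto.
  - intros B hB. split.
    + apply SigmaC_union. intro n; apply hB.
    + apply SigmaC_ext with (fun x => forall n, ~ B n x).
      * apply SigmaC_inter. intro n; apply hB.
      * intro x; split; [intros h [n hn]; apply (h n); auto|intros h n hn; apply h; eauto].
Qed.

(* the diagonal analytic set *)
Definition QD (x : cantor) (b : baire) : Prop :=
  forall k, cv x k = 1%nat -> ~ matches k (cv x) b.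
Definition Dg (x : cantor) : Prop := exists b, QD x b.

Lemma QD_closed : closedQ QD.
Proof.
  intros x b hn. unfold QD in hn. apply not_all_ex_not in hn. destruct hn as [k hk].
  apply imply_to_and in hk. destruct hk as [hk1 hk2]. apply NNPP in hk2.
  exists (S k + bn k)%nat. intros x' b' h1 h2 hq.
  apply (hq k).
  - rewrite <- h1 by lia. auto.
  - eapply matches_prefix; eauto; eapply agree_le; eauto; lia.
Qed.

Lemma Dg_Sigma : SigmaC Dg.
Proof. exists QD; split; [apply QD_closed|intro; tauto]. Qed.

Lemma universal Q : closedQ Q -> exists a : cantor, forall x b,
  Q x b <-> (forall k, cv a k = 1%nat -> ~ matches k (cv x) b).
Proof.
  intro HQ.
  set (f := fun k => if excluded_middle_informative (forall x b, matches k (cv x) b -> ~ Q x b) then 1%nat else 0%nat).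
  assert (hf : forall n, (f n <= 1)%nat).
  { intro n; unfold f; destruct (excluded_middle_informative _); lia. }
  exists (exist _ f hf). intros x b. unfold cv at 1; simpl. split.
  - intros hq k hk hm. unfold f in hk. destruct (excluded_middle_informative _) as [h|h]; [|discriminate].
    exact (h x b hm hq).
  - intro h. apply NNPP; intro hn. destruct (HQ x b hn) as [N hN].
    apply (h (code N (cv x) b)).
    + unfold f. destruct (excluded_middle_informative _) as [h'|h']; auto.
      exfalso; apply h'. intros x' b' hm. apply matches_code in hm. destruct hm; auto.
    + apply matches_code; split; apply agree_refl.
Qed.

Lemma not_Sigma_coDg : ~ SigmaC (fun x => ~ Dg x).
Proof.
  intros [Q [HQ HE]]. destruct (universal Q HQ) as [a Ha].
  assert (Dg a <-> ~ Dg a).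
  { split; intro h.
    - destruct h as [b hb]. apply HE. exists b. apply Ha. exact hb.
    - apply HE in h. destruct h as [b hb]. exists b. intros k hk. exact (proj1 (Ha a b) hb k hk). }
  tauto.
Qed.

Lemma Dg_not_borel A : (forall x, A x <-> Dg x) -> ~ borel cantor_dist A.
Proof.
  intros E hB. apply borel_Delta in hB. destruct hB as [_ h].
  apply not_Sigma_coDg. apply SigmaC_ext with (fun x => ~ A x); auto. intro x; rewrite E; tauto.
Qed.


Lemma least_nat (P : nat -> Prop) : (exists n, P n) -> exists n, P n /\ forall m, (m < n)%nat -> ~ P m.
Proof.
  intros [n Hn]. revert Hn. pattern n; apply (well_founded_ind Wf_nat.lt_wf); clear n.
  intros n IH Hn.
  destruct (classic (exists m, (m < n)%nat /\ P m)) as [[m [h1 h2]]|hno].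
  - exact (IH m h1 h2).
  - exists n; split; auto. intros m hm hp; apply hno; eauto.
Qed.

Lemma agree_open_baire (A : baire -> Prop) :
  (forall y, A y -> exists N, forall y', agree y y' N -> A y') -> open_in baire_dist A.
Proof.
  intros H y hy. destruct (H y hy) as [N hN]. exists (/ (INR N + 1)). split; [apply inv_pos|].
  intros y' hd. apply hN. apply bd_small'; auto.
Qed.

Definition popen (A : cantor * baire -> Prop) : Prop :=
  forall p, A p -> exists N, forall p', agree (cv (fst p)) (cv (fst p')) N -> agree (snd p) (snd p') N -> A p'.

Lemma popen_open A : popen A -> open_in (prod_dist cantor_dist baire_dist) A.
Proof.
  intros H p hp. destruct (H p hp) as [N hN]. exists (/ (INR N + 1)). split; [apply inv_pos|].
  intros p' hd. unfold prod_dist in hd.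
  pose proof (Rmax_l (cantor_dist (fst p) (fst p')) (baire_dist (snd p) (snd p'))).
  pose proof (Rmax_r (cantor_dist (fst p) (fst p')) (baire_dist (snd p) (snd p'))).
  assert (c1 : cantor_dist (fst p) (fst p') < / (INR N + 1)) by lra.
  assert (c2 : baire_dist (snd p) (snd p') < / (INR N + 1)) by lra.
  apply hN; apply bd_small'; [exact c1|exact c2].
Qed.

Lemma popen_borel A : popen A -> borel (prod_dist cantor_dist baire_dist) A.
Proof. intro h; apply borel_open, popen_open; auto. Qed.

Lemma popen_compl_borel A : popen (fun p => ~ A p) -> borel (prod_dist cantor_dist baire_dist) A.
Proof.
  intro h. apply borel_ext with (fun p => ~ ~ A p); [|intro; tauto].
  apply borel_compl, popen_borel; auto.
Qed.

Section PartA.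
Variable Q : cantor -> baire -> Prop.
Hypothesis HQ : closedQ Q.
Variables (x0 : cantor) (b0 : baire).
Hypothesis Hx0 : Q x0 b0.

Definition cons n x b := exists x' b', agree (cv x) (cv x') n /\ agree b b' n /\ Q x' b'.

Lemma cons_Q n x b : Q x b -> cons n x b.
Proof. intro h; exists x, b; repeat split; auto using agree_refl. Qed.

Lemma cons_all x b : (forall n, cons n x b) -> Q x b.
Proof.
  intro h. apply NNPP; intro hn. destruct (HQ x b hn) as [N hN].
  destruct (h N) as [x' [b' [h1 [h2 h3]]]]. exact (hN x' b' h1 h2 h3).
Qed.

Lemma cons_tr n x b x2 b2 : agree (cv x) (cv x2) n -> agree b b2 n -> cons n x b -> cons n x2 b2.
Proof.
  intros h1 h2 [x' [b' [h3 [h4 h5]]]]. exists x', b'. repeat split; auto.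
  - eapply agree_trans; [apply agree_sym|]; eauto.
  - eapply agree_trans; [apply agree_sym|]; eauto.
Qed.

Lemma cons_mono n m x b : (n <= m)%nat -> cons m x b -> cons n x b.
Proof.
  intros h [x' [b' [h3 [h4 h5]]]]. exists x', b'. repeat split; auto; eapply agree_le; eauto.
Qed.

Definition pb (y : baire) : baire := fun i => pred (y i).

Lemma agree_pb y y' n : agree y y' n -> agree (pb y) (pb y') n.
Proof. intros h i hi; unfold pb; rewrite h; auto. Qed.

Definition g (x : cantor) : nat :=
  if excluded_middle_informative (exists m, forall k, (m <= k)%nat -> cv x k = 0%nat) then 1%nat else 0%nat.

Definition FF (x : cantor) (y : baire) : Prop :=
  ((forall i, y i <> 0%nat) /\ Q x (pb y)) \/
  exists n, (forall i, (i < n)%nat -> y i <> 0%nat) /\ y n = 0%nat /\ cons n x (pb y) /\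
            forall j, (n < j)%nat -> y j = g x.

Lemma FF_mv : multi_valued FF.
Proof.
  intro x. exists (fun i => match i with 0%nat => 0%nat | _ => g x end).
  right. exists 0%nat. repeat split.
  - intros; lia.
  - exists x0, b0. repeat split; auto; intros i hi; lia.
  - intros j hj. destruct j; [lia|auto].
Qed.

Lemma mark_eq y y' n m : (forall i, (i < m)%nat -> y' i <> 0%nat) -> y' m = 0%nat ->
  agree y y' (S n) -> (forall i, (i < n)%nat -> y i <> 0%nat) -> y n = 0%nat -> m = n.
Proof.
  intros h1 h2 h3 h4 h5.
  destruct (Nat.lt_total m n) as [l|[e|l]]; auto.
  - exfalso. apply (h4 m l). rewrite h3 by lia. auto.
  - exfalso. apply (h1 n l). rewrite <- h3 by lia. auto.
Qed.

Lemma FF_closed x : closed_in baire_dist (FF x).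
Proof.
  unfold closed_in. apply agree_open_baire. intros y hy.
  destruct (classic (exists i, y i = 0%nat)) as [hz|hnz].
  - destruct (least_nat _ hz) as [n [hn1 hn2]].
    assert (hne : forall i, (i < n)%nat -> y i <> 0%nat) by (intros i hi h; apply (hn2 i hi h)).
    assert (hc : ~ (cons n x (pb y) /\ forall j, (n < j)%nat -> y j = g x)).
    { intros [c1 c2]. apply hy. right. exists n. repeat split; auto. }
    apply not_and_or in hc. destruct hc as [hc|hc].
    + exists (S n). intros y' ha [[f1 f2]|[m [f1 [f2 [f3 f4]]]]].
      * apply (f1 n). rewrite <- ha by lia. auto.
      * assert (m = n) by (eapply mark_eq; eauto). subst m.
        apply hc. eapply cons_tr; [apply agree_refl| |exact f3].
        apply agree_pb. apply agree_sym; eapply agree_le; eauto.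
    + apply not_all_ex_not in hc. destruct hc as [j hj]. apply imply_to_and in hj. destruct hj as [hj1 hj2].
      exists (S j). intros y' ha [[f1 f2]|[m [f1 [f2 [f3 f4]]]]].
      * apply (f1 n). rewrite <- ha by lia. auto.
      * assert (m = n) by (eapply mark_eq; eauto; eapply agree_le; eauto; lia). subst m.
        apply hj2. rewrite ha by lia. auto.
  - assert (hall : forall i, y i <> 0%nat) by (intros i h; apply hnz; eauto).
    assert (hq : ~ Q x (pb y)) by (intro h; apply hy; left; auto).
    assert (hc : exists n, ~ cons n x (pb y)).
    { apply not_all_ex_not. intro h; apply hq; apply cons_all; auto. }
    destruct hc as [n hn]. exists n. intros y' ha [[f1 f2]|[m [f1 [f2 [f3 f4]]]]].
    + apply hn. eapply cons_tr; [apply agree_refl| |apply cons_Q; exact f2].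
      apply agree_pb, agree_sym; auto.
    + destruct (le_lt_dec n m) as [l|l].
      * apply hn. apply cons_mono with (n := n) in f3; auto.
        eapply cons_tr; [apply agree_refl| |exact f3]. apply agree_pb, agree_sym; auto.
      * apply (hall m). rewrite ha; auto.
Qed.

Lemma g01 x : g x = 0%nat \/ g x = 1%nat.
Proof. unfold g; destruct (excluded_middle_informative _); auto. Qed.

Lemma g_dense x del : 0 < del -> exists x', cantor_dist x x' < del /\ g x' <> g x.
Proof.
  intro hd. destruct (arch_inv del hd) as [M hM].
  set (f1 := fun i => if Nat.ltb i M then cv x i else 0%nat).
  set (f2 := fun i => if Nat.ltb i M then cv x i else 1%nat).
  assert (h1 : forall i, (f1 i <= 1)%nat).
  { intro i; unfold f1; destruct (Nat.ltb i M); [apply (proj2_sig x)|lia]. }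
  assert (h2 : forall i, (f2 i <= 1)%nat).
  { intro i; unfold f2; destruct (Nat.ltb i M); [apply (proj2_sig x)|lia]. }
  set (x1 := exist _ f1 h1 : cantor). set (x2 := exist _ f2 h2 : cantor).
  assert (a1 : agree (cv x) (cv x1) M).
  { intros i hi; unfold cv at 2; simpl; unfold f1. apply Nat.ltb_lt in hi; rewrite hi; auto. }
  assert (a2 : agree (cv x) (cv x2) M).
  { intros i hi; unfold cv at 2; simpl; unfold f2. apply Nat.ltb_lt in hi; rewrite hi; auto. }
  assert (g1 : g x1 = 1%nat).
  { unfold g; destruct (excluded_middle_informative _) as [h|h]; auto. exfalso; apply h.
    exists M. intros k hk. unfold cv; simpl; unfold f1. destruct (Nat.ltb_spec k M); auto; lia. }
  assert (g2 : g x2 = 0%nat).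
  { unfold g; destruct (excluded_middle_informative _) as [h|h]; auto. exfalso.
    destruct h as [m hm]. specialize (hm (m + M)%nat ltac:(lia)). revert hm.
    unfold cv; simpl; unfold f2. destruct (Nat.ltb_spec (m + M) M); [lia|discriminate]. }
  destruct (g01 x) as [e|e].
  - exists x1. split; [|lia]. unfold cantor_dist. pose proof (bd_agree _ _ _ a1). fold (cv x) (cv x1); lra.
  - exists x2. split; [|lia]. unfold cantor_dist. pose proof (bd_agree _ _ _ a2). fold (cv x) (cv x2); lra.
Qed.

Lemma FF_cont x : mv_continuous_at cantor_dist baire_dist FF x <-> exists b, Q x b.
Proof.
  split.
  - intros [y [[[f1 f2]|[n [f1 [f2 [f3 f4]]]]] H]]; [eauto|].
    exfalso. destruct (H (/ (INR (S n) + 1)) (inv_pos _)) as [del [hd hc]].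
    destruct (g_dense x del hd) as [x' [hx' hg]].
    destruct (hc x' hx') as [y' [hy' hdy]]. apply bd_small in hdy.
    destruct hy' as [[e1 e2]|[m [e1 [e2 [e3 e4]]]]].
    + apply (e1 n). rewrite <- hdy by lia. auto.
    + assert (m = n) by (eapply mark_eq; eauto; eapply agree_le; eauto). subst m.
      apply hg. rewrite <- (e4 (S n)) by lia. rewrite <- (f4 (S n)) by lia. symmetry; apply hdy; lia.
  - intros [b hb]. exists (fun i => S (b i)). split.
    + left. split; [intros; lia|]. replace (pb (fun i => S (b i))) with b; auto.
    + intros eps he. destruct (arch_inv eps he) as [N hN]. exists (/ (INR N + 1)). split; [apply inv_pos|].
      intros x' hx'. apply bd_small' in hx'.
      set (y' := fun i => if Nat.ltb i N then S (b i) else if Nat.eqb i N then 0%nat else g x').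
      exists y'. split.
      * right. exists N. repeat split.
        -- intros i hi. unfold y'. apply Nat.ltb_lt in hi. rewrite hi. lia.
        -- unfold y'. rewrite Nat.ltb_irrefl, Nat.eqb_refl. auto.
        -- eapply cons_tr; [exact hx'| |apply cons_Q; exact hb].
           intros i hi. unfold pb, y'. apply Nat.ltb_lt in hi. rewrite hi. auto.
        -- intros j hj. unfold y'. destruct (Nat.ltb_spec j N); [lia|]. destruct (Nat.eqb_spec j N); [lia|auto].
      * eapply Rle_lt_trans; [|exact hN]. apply bd_agree. intros i hi. unfold y'.
        apply Nat.ltb_lt in hi; rewrite hi; auto.
Qed.

Lemma FF_graph_borel : borel (prod_dist cantor_dist baire_dist) (mv_graph FF).
Proof.
  set (G1 := fun p : cantor * baire => (forall i, snd p i <> 0%nat) /\ Q (fst p) (pb (snd p))).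
  set (H := fun n (p : cantor * baire) => (forall i, (i < n)%nat -> snd p i <> 0%nat) /\ snd p n = 0%nat /\ cons n (fst p) (pb (snd p))).
  set (Tc := fun n c (p : cantor * baire) => forall j, (n < j)%nat -> snd p j = c).
  set (E1 := fun p : cantor * baire => exists m, forall k, (m <= k)%nat -> cv (fst p) k = 0%nat).
  assert (bG1 : borel (prod_dist cantor_dist baire_dist) G1).
  { apply popen_compl_borel. intros p hp. unfold G1 in hp. apply not_and_or in hp.
    destruct hp as [hp|hp].
    - apply not_all_ex_not in hp. destruct hp as [i hi]. apply NNPP in hi.
      exists (S i). intros p' h1 h2 [f1 f2]. apply (f1 i). rewrite <- h2 by lia. auto.
    - assert (hc : exists n, ~ cons n (fst p) (pb (snd p))).
      { apply not_all_ex_not. intro h; apply hp; apply cons_all; auto. }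
      destruct hc as [n hn]. exists n. intros p' h1 h2 [f1 f2]. apply hn.
      eapply cons_tr; [apply agree_sym; exact h1|apply agree_pb, agree_sym; exact h2|apply cons_Q; exact f2]. }
  assert (bH : forall n, borel (prod_dist cantor_dist baire_dist) (H n)).
  { intro n. apply popen_borel. intros p [f1 [f2 f3]]. exists (S n). intros p' h1 h2. repeat split.
    - intros i hi. rewrite <- h2 by lia. auto.
    - rewrite <- h2 by lia. auto.
    - eapply cons_tr; [eapply agree_le; [exact h1|lia]|apply agree_pb; eapply agree_le; [exact h2|lia]|exact f3]. }
  assert (bT : forall n c, borel (prod_dist cantor_dist baire_dist) (Tc n c)).
  { intros n c. apply popen_compl_borel. intros p hp. apply not_all_ex_not in hp. destruct hp as [j hj].
    apply imply_to_and in hj. destruct hj as [hj1 hj2].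
    exists (S j). intros p' h1 h2 ht. apply hj2. rewrite h2 by lia. apply ht; auto. }
  assert (bE1 : borel (prod_dist cantor_dist baire_dist) E1).
  { apply borel_union. intro m. apply popen_compl_borel. intros p hp.
    apply not_all_ex_not in hp. destruct hp as [k hk]. apply imply_to_and in hk. destruct hk as [hk1 hk2].
    exists (S k). intros p' h1 h2 ht. apply hk2. rewrite h1 by lia. apply ht; auto. }
  apply borel_ext with (fun p => G1 p \/ exists n, H n p /\
     ((E1 p /\ Tc n 1%nat p) \/ (~ E1 p /\ Tc n 0%nat p))).
  - apply borel_union2; auto. apply borel_union. intro n. apply borel_inter2; auto.
    apply borel_union2; apply borel_inter2; auto. apply borel_compl; auto.
  - intros [x y]. unfold mv_graph, FF, G1, H, Tc, E1; simpl.
    assert (gE : forall x, g x = (if excluded_middle_informative (exists m, forall k, (m <= k)%nat -> cv x k = 0%nat) then 1%nat else 0%nat)) by reflexivity.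
    rewrite gE. destruct (excluded_middle_informative _) as [e|e].
    + split; intros [h|[n h]]; auto; right; exists n; tauto.
    + split; intros [h|[n h]]; auto; right; exists n; tauto.
Qed.

End PartA.


Fixpoint sumM (M : nat -> nat) (K : nat) : nat :=
  match K with 0%nat => M 0%nat | S K' => (sumM M K' + M K)%nat end.
Lemma sumM_ge M K j : (j <= K)%nat -> (M j <= sumM M K)%nat.
Proof.
  induction K as [|K IH]; intro h; simpl.
  - assert (j = 0%nat) by lia; subst; lia.
  - destruct (Nat.eq_dec j (S K)) as [->|ne]; [lia|]. specialize (IH ltac:(lia)); lia.
Qed.

Lemma baire_complete_strong (u : nat -> baire) : cauchy_seq baire_dist u ->
  exists l, seq_converges baire_dist u l /\ forall i, exists n, l i = u n i.
Proof.
  intro H.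
  assert (hM : forall i, exists M, forall m n, (M <= m)%nat -> (M <= n)%nat -> agree (u m) (u n) (S i)).
  { intro i. destruct (H _ (inv_pos i)) as [M hM]. exists M. intros m n h1 h2. apply bd_small; auto. }
  destruct (fchoice _ hM) as [M hMs].
  exists (fun i => u (M i) i). split.
  - intros eps he. destruct (arch_inv eps he) as [K hK]. exists (sumM M K).
    intros n hn. eapply Rle_lt_trans; [|exact hK]. apply bd_agree.
    intros i hi. apply (hMs i n (M i)); try lia.
    pose proof (sumM_ge M K i ltac:(lia)); lia.
  - intro i; eauto.
Qed.

Lemma baire_complete : complete_metric baire_dist.
Proof. intros u hu. destruct (baire_complete_strong u hu) as [l [h _]]; eauto. Qed.

Lemma cantor_complete : complete_metric cantor_dist.
Proof.
  intros u hu. destruct (baire_complete_strong (fun n => cv (u n)) hu) as [l [h1 h2]].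
  assert (hl : forall i, (l i <= 1)%nat).
  { intro i. destruct (h2 i) as [n e]. rewrite e. apply (proj2_sig (u n)). }
  exists (exist _ l hl). exact h1.
Qed.

Lemma ui_complete : complete_metric ui_dist.
Proof.
  intros u hu.
  assert (hc : Cauchy_crit (fun n => proj1_sig (u n))).
  { intros eps he. destruct (hu eps he) as [N hN]. exists N. intros n m h1 h2. apply hN; lia. }
  destruct (R_complete _ hc) as [l hl].
  assert (h0 : 0 <= l).
  { apply Rnot_lt_le; intro h. destruct (hl (- l)) as [N hN]; [lra|].
    specialize (hN N (le_n N)). unfold Rdist in hN. pose proof (proj2_sig (u N)) as [a b].
    apply Rabs_def2 in hN. lra. }
  assert (h1 : l <= 1).
  { apply Rnot_lt_le; intro h. destruct (hl (l - 1)) as [N hN]; [lra|].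
    specialize (hN N (le_n N)). unfold Rdist in hN. pose proof (proj2_sig (u N)) as [a b].
    apply Rabs_def2 in hN. lra. }
  exists (exist _ l (conj h0 h1)). intros eps he. destruct (hl eps he) as [N hN].
  exists N. intros n hn. apply hN; lia.
Qed.

Lemma prod_complete {X Y} (dX : X -> X -> R) (dY : Y -> Y -> R) :
  complete_metric dX -> complete_metric dY -> complete_metric (prod_dist dX dY).
Proof.
  intros cX cY u hu.
  destruct (cX (fun n => fst (u n))) as [l1 h1].
  { intros eps he. destruct (hu eps he) as [N hN]. exists N. intros m n a b.
    specialize (hN m n a b). unfold prod_dist in hN. pose proof (Rmax_l (dX (fst (u m)) (fst (u n))) (dY (snd (u m)) (snd (u n)))). lra. }
  destruct (cY (fun n => snd (u n))) as [l2 h2].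
  { intros eps he. destruct (hu eps he) as [N hN]. exists N. intros m n a b.
    specialize (hN m n a b). unfold prod_dist in hN. pose proof (Rmax_r (dX (fst (u m)) (fst (u n))) (dY (snd (u m)) (snd (u n)))). lra. }
  exists (l1, l2). intros eps he.
  destruct (h1 eps he) as [N1 hN1]. destruct (h2 eps he) as [N2 hN2].
  exists (N1 + N2)%nat. intros n hn. unfold prod_dist; simpl.
  apply Rmax_lub_lt; [apply hN1|apply hN2]; lia.
Qed.

Lemma baire_separable : separable_metric baire_dist.
Proof.
  exists (fun k => Some (fun i => el i k)). intros x eps he.
  destruct (arch_inv eps he) as [N hN]. exists (enc x N), (fun i => el i (enc x N)). split; auto.
  eapply Rle_lt_trans; [|exact hN]. apply bd_agree. intros i hi. rewrite el_enc; auto.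
Qed.

Lemma min1_le n : (Nat.min 1 n <= 1)%nat.
Proof. lia. Qed.

Lemma cantor_separable : separable_metric cantor_dist.
Proof.
  exists (fun k => Some (exist (fun a : baire => forall n, (a n <= 1)%nat) (fun i => Nat.min 1 (el i k)) (fun i => min1_le (el i k)))). intros x eps he.
  destruct (arch_inv eps he) as [N hN]. exists (enc (cv x) N).
  eexists. split; [reflexivity|]. unfold cantor_dist; simpl.
  eapply Rle_lt_trans; [|exact hN]. apply bd_agree. intros i hi. rewrite el_enc; auto.
  pose proof (proj2_sig x i) as hh. unfold cv. destruct (proj1_sig x i) as [|[|k]]; simpl in *; lia.
Qed.

Lemma floor_nat r : 0 <= r -> exists p : nat, INR p <= r < INR p + 1.
Proof.
  intro h. destruct (archimed r) as [a b].
  assert (hz : (0 < up r)%Z). { apply lt_IZR. simpl. lra. }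
  exists (Z.to_nat (up r - 1)). rewrite INR_IZR_INZ, Z2Nat.id by lia.
  rewrite minus_IZR. simpl. lra.
Qed.

Lemma ui_val_ok p q : 0 <= Rmin 1 (INR p / INR (S q)) <= 1.
Proof.
  split.
  - apply Rmin_glb; [lra|]. unfold Rdiv. apply Rmult_le_pos; [apply pos_INR|].
    left; apply Rinv_0_lt_compat. apply lt_0_INR; lia.
  - apply Rmin_l.
Qed.

Lemma ui_separable : separable_metric ui_dist.
Proof.
  exists (fun k => Some (exist _ (Rmin 1 (INR (p1 k) / INR (S (p2 k)))) (ui_val_ok (p1 k) (p2 k)))).
  intros [t [ht0 ht1]] eps he. destruct (arch_inv eps he) as [q hq].
  destruct (floor_nat (t * (INR q + 1))) as [p [hp1 hp2]].
  { apply Rmult_le_pos; auto. pose proof (inr1_pos q); lra. }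
  exists (pr p q). eexists. split; [reflexivity|]. unfold ui_dist. cbn [proj1_sig].
  rewrite p1_pr, p2_pr, S_INR.
  pose proof (inr1_pos q) as hq0.
  assert (e1 : INR p / (INR q + 1) <= t).
  { apply Rmult_le_reg_r with (INR q + 1); auto. unfold Rdiv. rewrite Rmult_assoc, Rinv_l by lra. lra. }
  assert (e2 : t - INR p / (INR q + 1) < / (INR q + 1)).
  { apply Rmult_lt_reg_r with (INR q + 1); auto. unfold Rdiv.
    rewrite Rmult_minus_distr_r, Rmult_assoc, Rinv_l by lra. lra. }
  rewrite Rmin_right by lra. rewrite Rabs_right by lra. lra.
Qed.

Lemma prod_separable {X Y} (dX : X -> X -> R) (dY : Y -> Y -> R) :
  separable_metric dX -> separable_metric dY -> separable_metric (prod_dist dX dY).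
Proof.
  intros [s1 h1] [s2 h2].
  exists (fun k => match s1 (p1 k), s2 (p2 k) with Some a, Some b => Some (a, b) | _, _ => None end).
  intros [x y] eps he. destruct (h1 x eps he) as [n1 [a [e1 d1]]]. destruct (h2 y eps he) as [n2 [b [e2 d2]]].
  exists (pr n1 n2), (a, b). rewrite p1_pr, p2_pr, e1, e2. split; auto.
  unfold prod_dist; simpl. apply Rmax_lub_lt; auto.
Qed.

Definition PP := (unit_interval * (cantor * baire))%type.
Definition dPP : PP -> PP -> R := prod_dist ui_dist (prod_dist cantor_dist baire_dist).

Lemma PP_polish : is_metric dPP /\ complete_metric dPP /\ separable_metric dPP.
Proof.
  unfold dPP. split; [|split].
  - apply prod_metric; [apply ui_metric|apply prod_metric; [apply cantor_metric|apply baire_metric]].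
  - apply prod_complete; [apply ui_complete|apply prod_complete; [apply cantor_complete|apply baire_complete]].
  - apply prod_separable; [apply ui_separable|apply prod_separable; [apply cantor_separable|apply baire_separable]].
Qed.

Lemma prod_dist_l {X Y} (dX : X -> X -> R) (dY : Y -> Y -> R) p q r :
  prod_dist dX dY p q < r -> dX (fst p) (fst q) < r.
Proof. unfold prod_dist; intro h; pose proof (Rmax_l (dX (fst p) (fst q)) (dY (snd p) (snd q))); lra. Qed.
Lemma prod_dist_r {X Y} (dX : X -> X -> R) (dY : Y -> Y -> R) p q r :
  prod_dist dX dY p q < r -> dY (snd p) (snd q) < r.
Proof. unfold prod_dist; intro h; pose proof (Rmax_r (dX (fst p) (fst q)) (dY (snd p) (snd q))); lra. Qed.

Lemma zero_ok : 0 <= 0 <= 1.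
Proof. lra. Qed.
Definition ui0 : unit_interval := exist _ 0 zero_ok.

Lemma analytic_A (Q : cantor -> baire -> Prop) (A : cantor -> Prop) :
  closedQ Q -> (forall x, A x <-> exists b, Q x b) -> analytic cantor_dist A.
Proof.
  intros HQ HA. exists PP, dPP. destruct PP_polish as [m1 [m2 m3]]. split; [auto|split; [auto|split; [auto|]]].
  exists (fun p : PP => proj1_sig (fst p) = 0 /\ Q (fst (snd p)) (snd (snd p))), (fun p : PP => fst (snd p)).
  split; [|split].
  - intros p hp. apply not_and_or in hp. destruct hp as [hp|hp].
    + exists (Rabs (proj1_sig (fst p))). split; [apply Rabs_pos_lt; auto|].
      intros p' hd [e _]. apply prod_dist_l in hd. unfold ui_dist in hd. rewrite e in hd.
      replace (proj1_sig (fst p) - 0) with (proj1_sig (fst p)) in hd by ring. lra.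
    + destruct (HQ _ _ hp) as [N hN]. exists (/ (INR N + 1)). split; [apply inv_pos|].
      intros p' hd [_ hq]. apply prod_dist_r in hd. pose proof (prod_dist_l _ _ _ _ _ hd) as h1.
      apply prod_dist_r in hd. apply (hN _ _ (bd_small' _ _ _ h1) (bd_small' _ _ _ hd) hq).
  - intros p eps he. exists eps. split; auto. intros p' hd. apply prod_dist_r in hd. apply prod_dist_l in hd. exact hd.
  - intro x. rewrite HA. split.
    + intros [b hb]. exists (ui0, (x, b)). simpl. auto.
    + intros [p [[_ hp] e]]. subst x. eauto.
Qed.


Lemma zc_ok : forall n : nat, ((fun _ : nat => 0%nat) n <= 1)%nat.
Proof. intro; simpl; lia. Qed.
Definition zc : cantor := exist _ (fun _ => 0%nat) zc_ok.

Lemma QD_zc : QD zc (fun _ => 0%nat).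
Proof. intros k hk. unfold cv in hk; simpl in hk. discriminate. Qed.

Definition FA := FF QD.

Lemma FA_cs x : mv_continuity_points cantor_dist baire_dist FA x <-> Dg x.
Proof.
  unfold mv_continuity_points, FA. rewrite (FF_cont QD). unfold Dg; tauto.
Qed.

Lemma FA_not_borel : ~ borel cantor_dist (mv_continuity_points cantor_dist baire_dist FA).
Proof. apply Dg_not_borel. exact FA_cs. Qed.

Theorem partA : exists F : cantor -> baire -> Prop,
     multi_valued F /\
     (forall x, closed_in baire_dist (F x)) /\
     borel (prod_dist cantor_dist baire_dist) (mv_graph F) /\
     analytic cantor_dist (mv_continuity_points cantor_dist baire_dist F) /\
     ~ borel cantor_dist (mv_continuity_points cantor_dist baire_dist F).
Proof.
  exists FA. split; [|split; [|split; [|split]]].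
  - apply (FF_mv QD zc (fun _ => 0%nat) QD_zc).
  - intro x. apply (FF_closed QD QD_closed x).
  - apply (FF_graph_borel QD QD_closed).
  - apply (analytic_A QD); [apply QD_closed|]. intro x. rewrite FA_cs. unfold Dg; tauto.
  - apply FA_not_borel.
Qed.


Lemma least_nat_h (P : nat -> Prop) : (exists n, P n) -> exists n, P n /\ forall m, (m < n)%nat -> ~ P m.
Proof.
  intros [n Hn]. revert Hn. pattern n; apply (well_founded_ind Wf_nat.lt_wf); clear n.
  intros n IH Hn.
  destruct (classic (exists m, (m < n)%nat /\ P m)) as [[m [h1 h2]]|hno].
  - exact (IH m h1 h2).
  - exists n; split; auto. intros m hm hp; apply hno; eauto.
Qed.

Definition q4 := / 4.
Lemma q4_pos n : 0 < q4 ^ n.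
Proof. apply pow_lt. unfold q4; lra. Qed.
Lemma q4_le1 k : q4 ^ k <= 1.
Proof.
  induction k; simpl; [lra|]. pose proof (q4_pos k). unfold q4 in *. lra.
Qed.
Lemma q4_anti m N : (m <= N)%nat -> q4 ^ N <= q4 ^ m.
Proof.
  intro h. replace N with (m + (N - m))%nat by lia. rewrite pow_add.
  pose proof (q4_pos m). pose proof (q4_le1 (N - m)).
  rewrite <- (Rmult_1_r (q4 ^ m)) at 2. apply Rmult_le_compat_l; lra.
Qed.
Lemma q4_small d : 0 < d -> exists N, q4 ^ N < d.
Proof.
  intro h. destruct (pow_lt_1_zero q4 ltac:(unfold q4; rewrite Rabs_right; lra) d h) as [N hN].
  exists N. specialize (hN N (le_n N)). rewrite Rabs_right in hN; auto. left; apply q4_pos.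
Qed.
Lemma q4_S n : q4 ^ S n = q4 * q4 ^ n.
Proof. reflexivity. Qed.

Fixpoint Sx (a : nat -> nat) (n : nat) : R :=
  match n with 0%nat => 0 | S n' => Sx a n' + 2 * INR (a n') * q4 ^ (S n') end.

Definition bin (a : nat -> nat) := forall i, (a i <= 1)%nat.

Lemma INR_le1 (k : nat) : (k <= 1)%nat -> 0 <= INR k <= 1.
Proof. intro h. destruct k as [|[|k]]; simpl; try lra; lia. Qed.

Lemma Sx_diff a n k : bin a -> 0 <= Sx a (n + k) - Sx a n <= 2/3 * (q4 ^ n - q4 ^ (n + k)).
Proof.
  intro hb. induction k as [|k IH].
  - rewrite Nat.add_0_r. lra.
  - rewrite Nat.add_succ_r. simpl Sx. pose proof (INR_le1 _ (hb (n + k)%nat)).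
    pose proof (q4_pos (n + k)). rewrite q4_S. unfold q4 in *.
    split; nra.
Qed.

Lemma Sx_agree a a' n : agree a a' n -> Sx a n = Sx a' n.
Proof.
  induction n as [|n IH]; intro h; simpl; auto.
  rewrite IH by (eapply agree_le; eauto). rewrite (h n) by lia. auto.
Qed.

Lemma lim_between (u : nat -> R) l n lo hi : Un_cv u l -> (forall m, (n <= m)%nat -> lo <= u m <= hi) -> lo <= l <= hi.
Proof.
  intros hc hb. split.
  - apply Rnot_lt_le; intro h. destruct (hc (lo - l)) as [N hN]; [lra|].
    specialize (hN (N + n)%nat ltac:(lia)). specialize (hb (N + n)%nat ltac:(lia)).
    unfold Rdist in hN. apply Rabs_def2 in hN. lra.
  - apply Rnot_lt_le; intro h. destruct (hc (l - hi)) as [N hN]; [lra|].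
    specialize (hN (N + n)%nat ltac:(lia)). specialize (hb (N + n)%nat ltac:(lia)).
    unfold Rdist in hN. apply Rabs_def2 in hN. lra.
Qed.

Lemma Sx_grow (x : cantor) : Un_growing (Sx (cv x)).
Proof.
  intro n. pose proof (Sx_diff (cv x) n 1 (proj2_sig x)). rewrite Nat.add_1_r in H. lra.
Qed.
Lemma Sx_ub (x : cantor) : has_ub (Sx (cv x)).
Proof.
  exists (2/3). intros r [n ->]. pose proof (Sx_diff (cv x) 0 n (proj2_sig x)). simpl in H.
  pose proof (q4_pos n). lra.
Qed.

Definition e (x : cantor) : R := proj1_sig (growing_cv _ (Sx_grow x) (Sx_ub x)).

Lemma e_cv x : Un_cv (Sx (cv x)) (e x).
Proof. unfold e. apply (proj2_sig (growing_cv _ (Sx_grow x) (Sx_ub x))). Qed.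

Lemma e_approx x n : 0 <= e x - Sx (cv x) n <= 2/3 * q4 ^ n.
Proof.
  assert (h : Sx (cv x) n <= e x <= Sx (cv x) n + 2/3 * q4 ^ n).
  { apply (lim_between _ _ n _ _ (e_cv x)). intros m hm.
    replace m with (n + (m - n))%nat by lia. pose proof (Sx_diff (cv x) n (m - n) (proj2_sig x)).
    pose proof (q4_pos (n + (m - n))). lra. }
  lra.
Qed.

Lemma e_range x : 0 <= e x <= 1.
Proof. pose proof (e_approx x 0). simpl in H. lra. Qed.

Definition eu (x : cantor) : unit_interval := exist _ (e x) (e_range x).

Lemma e_agree x x' n : agree (cv x) (cv x') n -> Rabs (e x - e x') <= 2/3 * q4 ^ n.
Proof.
  intro h. pose proof (e_approx x n). pose proof (e_approx x' n). rewrite (Sx_agree _ _ _ h) in H.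
  apply Rabs_le. lra.
Qed.

Lemma e_sep x x' N : Rabs (e x - e x') < q4 ^ N -> agree (cv x) (cv x') N.
Proof.
  intro h. apply NNPP. intro hn.
  assert (hex : exists m, (m < N)%nat /\ cv x m <> cv x' m).
  { apply NNPP; intro h'. apply hn. intros i hi. apply NNPP; intro h''. apply h'; eauto. }
  destruct (least_nat_h _ hex) as [m [[hm1 hm2] hm3]].
  assert (ha : agree (cv x) (cv x') m).
  { intros i hi. apply NNPP; intro h''. apply (hm3 i hi). split; auto; lia. }
  pose proof (e_approx x (S m)) as A1. pose proof (e_approx x' (S m)) as A2.
  simpl Sx in A1, A2. rewrite (Sx_agree _ _ _ ha) in A1.
  pose proof (q4_anti (S m) N hm1) as A3. pose proof (q4_pos (S m)) as A4.
  pose proof (proj2_sig x m) as b1. pose proof (proj2_sig x' m) as b2. fold (cv x) (cv x') in b1, b2.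
  destruct (cv x m) as [|[|k]]; destruct (cv x' m) as [|[|k']]; try lia; simpl INR in *;
  rewrite q4_S in *; apply Rabs_def2 in h; lra.
Qed.


Lemma e_inj x x' : e x = e x' -> x = x'.
Proof.
  intro h. apply cv_inj. apply functional_extensionality. intro i.
  apply (e_sep x x' (S i)). rewrite h. replace (e x' - e x') with 0 by ring. rewrite Rabs_R0. apply q4_pos. lia.
Qed.

Lemma e_closed t : (forall m, exists x, Rabs (t - e x) < q4 ^ m) -> exists x, e x = t.
Proof.
  intro H.
  assert (H' : forall m, exists x, Rabs (t - e x) < q4 ^ (S m) / 2).
  { intro m. destruct (H (S (S m))) as [x hx]. exists x. rewrite !q4_S in *. pose proof (q4_pos m).
    unfold q4 in *. lra. }
  destruct (fchoice _ H') as [xs hxs].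
  assert (hag : forall i j, (i <= j)%nat -> agree (cv (xs i)) (cv (xs j)) (S i)).
  { intros i j hij. apply e_sep. pose proof (hxs i). pose proof (hxs j).
    pose proof (q4_anti (S i) (S j) ltac:(lia)).
    replace (e (xs i) - e (xs j)) with (- (t - e (xs i)) + (t - e (xs j))) by ring.
    eapply Rle_lt_trans; [apply Rabs_triang|]. rewrite Rabs_Ropp. lra. }
  assert (hb : forall i, ((fun i => cv (xs i) i) i <= 1)%nat) by (intro i; apply (proj2_sig (xs i))).
  set (xx := exist _ (fun i => cv (xs i) i) hb : cantor).
  exists xx.
  assert (hm : forall m, Rabs (t - e xx) < 2 * q4 ^ m).
  { intro m. assert (a : agree (cv xx) (cv (xs m)) (S m)).
    { intros i hi. unfold xx, cv at 1; simpl. apply (hag i m); lia. }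
    pose proof (e_agree _ _ _ a). pose proof (hxs m).
    replace (t - e xx) with ((t - e (xs m)) - (e xx - e (xs m))) by ring.
    eapply Rle_lt_trans; [apply Rabs_triang|]. rewrite Rabs_Ropp.
    rewrite q4_S in *. pose proof (q4_pos m). unfold q4 in *. lra. }
  destruct (Req_dec (e xx) t) as [ok|ne]; auto. exfalso.
  assert (hp : 0 < Rabs (t - e xx)) by (apply Rabs_pos_lt; lra).
  destruct (q4_small (Rabs (t - e xx) / 2)) as [m hq]; [lra|].
  specialize (hm m). lra.
Qed.

Lemma gap_sep t : ~ (exists x, e x = t) -> exists m, forall x, q4 ^ m <= Rabs (t - e x).
Proof.
  intro h. apply NNPP; intro h'. apply h. apply e_closed. intro m. apply NNPP; intro h''.
  apply h'. exists m. intro x. apply Rnot_lt_le. intro hl. apply h''. eauto.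
Qed.

Definition cf (y : baire) : baire := fun i => if Nat.eqb (y (p1 i)) (p2 i) then 1%nat else 0%nat.
Lemma cf_bin y i : (cf y i <= 1)%nat.
Proof. unfold cf; destruct (Nat.eqb _ _); lia. Qed.
Definition cc (y : baire) : cantor := exist _ (cf y) (cf_bin y).

Lemma cc_agree y y' N : agree y y' N -> agree (cv (cc y)) (cv (cc y')) N.
Proof.
  intros h i hi. unfold cv, cc; simpl. unfold cf. rewrite h; auto. pose proof (p1_le i); lia.
Qed.

Lemma cc_pt y m : cv (cc y) (pr m (y m)) = 1%nat.
Proof. unfold cv, cc, cf; simpl. rewrite p1_pr, p2_pr, Nat.eqb_refl. auto. Qed.

Lemma cc_pt_inv y m k : cv (cc y) (pr m k) = 1%nat -> y m = k.
Proof. unfold cv, cc, cf; simpl. rewrite p1_pr, p2_pr. destruct (Nat.eqb_spec (y m) k); auto; discriminate. Qed.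

Fixpoint bnd2 (y : baire) (N : nat) : nat :=
  match N with 0%nat => 0%nat | S N' => Nat.max (bnd2 y N') (S (pr N' (y N'))) end.
Lemma bnd2_spec y N m : (m < N)%nat -> (pr m (y m) < bnd2 y N)%nat.
Proof.
  induction N as [|N IH]; intro h; [lia|]. simpl.
  destruct (Nat.eq_dec m N) as [->|ne]; [lia|]. specialize (IH ltac:(lia)); lia.
Qed.

Lemma cc_inv y N y' : agree (cv (cc y)) (cv (cc y')) (bnd2 y N) -> agree y y' N.
Proof.
  intros h m hm. symmetry. apply cc_pt_inv. rewrite <- h. apply cc_pt. apply bnd2_spec; auto.
Qed.

Lemma cc_inj y y' : cc y = cc y' -> y = y'.
Proof.
  intro h. apply functional_extensionality. intro m. apply (cc_inv y (S m) y'). rewrite h. apply agree_refl. lia.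
Qed.

Definition crange (z : cantor) : Prop :=
  forall m, (exists k, cv z (pr m k) = 1%nat) /\ (forall k k', cv z (pr m k) = 1%nat -> cv z (pr m k') = 1%nat -> k = k').

Lemma crange_iff z : crange z <-> exists y, cc y = z.
Proof.
  split.
  - intro h. destruct (fchoice _ (fun m => proj1 (h m))) as [y hy]. exists y.
    apply cv_inj, functional_extensionality. intro i. unfold cv at 1, cc; simpl. unfold cf.
    rewrite <- (pr_p i). rewrite p1_pr, p2_pr.
    destruct (Nat.eqb_spec (y (p1 i)) (p2 i)) as [e|ne].
    + rewrite <- e. symmetry; apply hy.
    + pose proof (proj2_sig z (pr (p1 i) (p2 i))) as hb. fold (cv z) in hb.
      destruct (cv z (pr (p1 i) (p2 i))) as [|[|k]] eqn:E; auto; try lia.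
      exfalso. apply ne. apply (proj2 (h (p1 i))); auto.
  - intros [y <-] m. split.
    + exists (y m). apply cc_pt.
    + intros k k' h1 h2. apply cc_pt_inv in h1. apply cc_pt_inv in h2. congruence.
Qed.

Lemma cantor_agree_open (A : cantor -> Prop) :
  (forall x, A x -> exists N, forall x', agree (cv x) (cv x') N -> A x') -> open_in cantor_dist A.
Proof.
  intros H x hx. destruct (H x hx) as [N hN]. exists (/ (INR N + 1)). split; [apply inv_pos|].
  intros x' hd. apply hN. apply bd_small'; auto.
Qed.

Lemma crange_borel : borel cantor_dist crange.
Proof.
  apply borel_inter. intro m. apply borel_inter2.
  - apply borel_union. intro k. apply borel_open, cantor_agree_open.
    intros x hx. exists (S (pr m k)). intros x' h. rewrite <- h by lia. auto.
  - apply borel_inter. intro k. apply borel_inter. intro k'.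
    apply borel_open, cantor_agree_open.
    intros x hx. exists (S (pr m k) + S (pr m k'))%nat. intros x' h h1 h2.
    apply hx; rewrite h by lia; auto.
Qed.


Definition gap (t : unit_interval) : Prop := ~ exists x, e x = proj1_sig t.

Definition FB (t u : unit_interval) : Prop :=
  gap t \/ exists x y, e x = proj1_sig t /\ proj1_sig u = e (cc y) /\ FA x y.

Lemma gap_open t : gap t -> exists r, 0 < r /\ forall t', Rabs (proj1_sig t - proj1_sig t') < r -> gap t'.
Proof.
  intro h. destruct (gap_sep _ h) as [m hm]. exists (q4 ^ m / 2). split; [pose proof (q4_pos m); lra|].
  intros t' ht [x hx]. specialize (hm x). rewrite hx in hm. pose proof (q4_pos m). lra.
Qed.

Lemma ui_self u : ui_dist u u = 0.
Proof. unfold ui_dist. replace (proj1_sig u - proj1_sig u) with 0 by ring. apply Rabs_R0. Qed.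

Lemma e2_small eps : 0 < eps -> exists N, 2/3 * q4 ^ N < eps.
Proof. intro h. destruct (q4_small eps h) as [N hN]. exists N. pose proof (q4_pos N). lra. Qed.

Lemma FA_mv : multi_valued FA.
Proof. apply (FF_mv QD zc (fun _ => 0%nat) QD_zc). Qed.

Lemma FB_mv : multi_valued FB.
Proof.
  intro t. destruct (classic (gap t)) as [h|h].
  - exists t; left; auto.
  - apply NNPP in h. destruct h as [x hx]. destruct (FA_mv x) as [y hy].
    exists (eu (cc y)). right. exists x, y. repeat split; auto.
Qed.

Lemma FB_cont t : mv_continuous_at ui_dist ui_dist FB t <->
  gap t \/ exists x, e x = proj1_sig t /\ mv_continuous_at cantor_dist baire_dist FA x.
Proof.
  split.
  - intros [u [Fu Hc]]. destruct (classic (gap t)) as [hg|hg]; [left; auto|right].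
    apply NNPP in hg. destruct hg as [x hx]. exists x. split; auto.
    destruct Fu as [Fu|[x1 [y [E1 [Eu F1]]]]]; [exfalso; apply Fu; eauto|].
    assert (x1 = x) by (apply e_inj; congruence). subst x1.
    exists y. split; auto. intros eps he.
    destruct (arch_inv eps he) as [N hN].
    destruct (Hc (q4 ^ (bnd2 y N)) (q4_pos _)) as [del [hdel Hd]].
    destruct (e2_small del hdel) as [M hM].
    exists (/ (INR M + 1)). split; [apply inv_pos|].
    intros x' hx'. apply bd_small' in hx'. apply e_agree in hx'.
    destruct (Hd (eu x')) as [u' [Fu' hu']].
    { unfold ui_dist; simpl. rewrite <- hx. lra. }
    destruct Fu' as [Fu'|[x'' [y' [E2 [Eu' F2]]]]].
    + exfalso. apply Fu'. exists x'. reflexivity.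
    + simpl in E2. apply e_inj in E2. subst x''. exists y'. split; auto.
      unfold ui_dist in hu'. rewrite Eu, Eu' in hu'.
      apply e_sep, cc_inv in hu'. eapply Rle_lt_trans; [apply bd_agree; exact hu'|exact hN].
  - intros [hg|[x [hx [y [Fy Hc]]]]].
    + exists t. split; [left; auto|]. intros eps he. destruct (gap_open t hg) as [r [hr hgr]].
      exists r. split; auto. intros t' ht'. exists t. split.
      * left. apply hgr. exact ht'.
      * rewrite ui_self. auto.
    + exists (eu (cc y)). split.
      { right. exists x, y. repeat split; auto. }
      intros eps he. destruct (e2_small eps he) as [N hN].
      destruct (Hc (/ (INR N + 1)) (inv_pos N)) as [del [hdel Hd]].
      destruct (arch_inv del hdel) as [M hM].
      exists (q4 ^ M). split; [apply q4_pos|]. intros t' ht'.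
      destruct (classic (gap t')) as [hg'|hg'].
      * exists (eu (cc y)). split; [left; auto|]. rewrite ui_self; auto.
      * apply NNPP in hg'. destruct hg' as [x' hx'].
        assert (hd : cantor_dist x x' < del).
        { unfold ui_dist in ht'. rewrite <- hx, <- hx' in ht'. apply e_sep in ht'.
          eapply Rle_lt_trans; [apply bd_agree; exact ht'|exact hM]. }
        destruct (Hd x' hd) as [y' [Fy' hy']].
        exists (eu (cc y')). split.
        -- right. exists x', y'. repeat split; auto.
        -- unfold ui_dist; simpl. apply bd_small', cc_agree, e_agree in hy'. lra.
Qed.

Definition CSB (t : unit_interval) : Prop := gap t \/ exists x, e x = proj1_sig t /\ Dg x.

Lemma FB_cs t : mv_continuity_points ui_dist ui_dist FB t <-> CSB t.
Proof.
  unfold mv_continuity_points, CSB. rewrite FB_cont.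
  split; intros [h|[x [h1 h2]]]; auto; right; exists x; split; auto; apply FA_cs; auto.
Qed.

Lemma eu_cont : metric_continuous cantor_dist ui_dist eu.
Proof.
  intros x eps he. destruct (e2_small eps he) as [N hN]. exists (/ (INR N + 1)). split; [apply inv_pos|].
  intros x' hx'. apply bd_small', e_agree in hx'. unfold ui_dist; simpl. lra.
Qed.

Lemma FB_not_borel : ~ borel ui_dist (mv_continuity_points ui_dist ui_dist FB).
Proof.
  intro hB. apply (borel_preimage_total cantor_dist ui_dist eu cantor_metric eu_cont) in hB.
  revert hB. apply Dg_not_borel. intro x. rewrite FB_cs. unfold CSB, gap. simpl. split.
  - intros [h|[x1 [h1 h2]]]; [exfalso; apply h; eauto|]. apply e_inj in h1; subst; auto.
  - intro h; right; eauto.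
Qed.


Lemma FB_analytic : analytic ui_dist (mv_continuity_points ui_dist ui_dist FB).
Proof.
  exists PP, dPP. destruct PP_polish as [m1 [m2 m3]]. split; [auto|split; [auto|split; [auto|]]].
  exists (fun p : PP => (e (fst (snd p)) = proj1_sig (fst p) /\ QD (fst (snd p)) (snd (snd p))) \/
                       (forall x', q4 ^ (snd (snd p) 0%nat) <= Rabs (proj1_sig (fst p) - e x'))),
         (fun p : PP => fst p).
  split; [|split].
  - intros [t [x b]] hp. simpl in hp. apply not_or_and in hp. destruct hp as [hp1 hp2].
    apply not_all_ex_not in hp2. destruct hp2 as [x2 hx2]. apply Rnot_le_lt in hx2.
    set (D2 := q4 ^ (b 0%nat) - Rabs (proj1_sig t - e x2)).
    assert (hD2 : 0 < D2) by (unfold D2; lra).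
    assert (hr1 : exists r1, 0 < r1 /\ forall (t' : unit_interval) (x' : cantor) (b' : baire), Rabs (proj1_sig t - proj1_sig t') < r1 -> cantor_dist x x' < r1 ->
                 baire_dist b b' < r1 -> ~ (e x' = proj1_sig t' /\ QD x' b')).
    { apply not_and_or in hp1. destruct hp1 as [h|h].
      - set (D := Rabs (e x - proj1_sig t)). assert (hD : 0 < D) by (apply Rabs_pos_lt; lra).
        destruct (e2_small (D / 2)) as [M hM]; [lra|].
        exists (Rmin (D / 2) (/ (INR M + 1))). split; [apply Rmin_glb_lt; [lra|apply inv_pos]|].
        intros t' x' b' h1 h2 h3 [h4 h5].
        pose proof (Rmin_l (D / 2) (/ (INR M + 1))). pose proof (Rmin_r (D / 2) (/ (INR M + 1))).
        assert (hh : cantor_dist x x' < / (INR M + 1)) by lra.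
        assert (a : agree (cv x) (cv x') M) by (apply bd_small'; exact hh).
        apply e_agree in a. rewrite h4 in a.
        assert (Rabs (e x - proj1_sig t) < D).
        { replace (e x - proj1_sig t) with ((e x - proj1_sig t') + (proj1_sig t' - proj1_sig t)) by ring.
          eapply Rle_lt_trans; [apply Rabs_triang|]. rewrite Rabs_minus_sym in h1. lra. }
        unfold D in H1. lra.
      - destruct (QD_closed _ _ h) as [N hN]. exists (/ (INR N + 1)). split; [apply inv_pos|].
        intros t' x' b' h1 h2 h3 [h4 h5]. apply (hN x' b'); auto; apply bd_small'; auto. }
    destruct hr1 as [r1 [hr1 Hr1]].
    exists (Rmin r1 (Rmin D2 1)). split.
    { apply Rmin_glb_lt; auto. apply Rmin_glb_lt; auto; lra. }
    intros [t' [x' b']] hd. unfold dPP in hd.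
    pose proof (prod_dist_l _ _ _ _ _ hd) as d1. apply prod_dist_r in hd.
    pose proof (prod_dist_l _ _ _ _ _ hd) as d2. apply prod_dist_r in hd. simpl in d1, d2, hd.
    pose proof (Rmin_l r1 (Rmin D2 1)) as q1.
    pose proof (Rmin_r r1 (Rmin D2 1)) as q2.
    pose proof (Rmin_l D2 1) as q3. pose proof (Rmin_r D2 1) as q4'.
    simpl. intros [h|h].
    + assert (hh1 : ui_dist t t' < r1) by lra. assert (hh2 : cantor_dist x x' < r1) by lra.
      apply (Hr1 t' x' b'); auto; lra.
    + assert (hb : b' 0%nat = b 0%nat).
      { symmetry. apply (bd_small b b' 0); [|lia]. simpl. replace (/ (0 + 1)) with 1 by field. lra. }
      specialize (h x2). rewrite hb in h.
      assert (Rabs (proj1_sig t' - e x2) < q4 ^ b 0%nat).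
      { replace (proj1_sig t' - e x2) with ((proj1_sig t' - proj1_sig t) + (proj1_sig t - e x2)) by ring.
        eapply Rle_lt_trans; [apply Rabs_triang|]. unfold ui_dist in d1. rewrite Rabs_minus_sym in d1.
        unfold D2 in *. lra. }
      lra.
  - intros p eps he. exists eps. split; auto. intros p' hd. apply prod_dist_l in hd. exact hd.
  - intro t. rewrite FB_cs. unfold CSB. split.
    + intros [hg|[x [hx [b hb]]]].
      * destruct (gap_sep _ hg) as [m hm]. exists (t, (zc, fun _ => m)). simpl. split; auto.
      * exists (t, (x, b)). simpl. split; auto.
    + intros [[t' [x b]] [[[h1 h2]|h] e']]; simpl in *; subst t'.
      * right. exists x. split; auto. exists b; auto.
      * left. intros [x1 hx1]. specialize (h x1). rewrite hx1 in h.
        replace (proj1_sig t - proj1_sig t) with 0 in h by ring. rewrite Rabs_R0 in h.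
        pose proof (q4_pos (b 0%nat)). lra.
Qed.

Definition D1 (t : unit_interval) : Prop := exists x, e x = proj1_sig t.
Definition D2 (u : unit_interval) : Prop := exists y, proj1_sig u = e (cc y).

Definition rr (t : unit_interval) : cantor :=
  match excluded_middle_informative (D1 t) with
  | left h => proj1_sig (constructive_indefinite_description _ h)
  | right _ => zc end.
Lemma rr_spec t : D1 t -> e (rr t) = proj1_sig t.
Proof.
  intro h. unfold rr. destruct (excluded_middle_informative (D1 t)) as [h'|h']; [|contradiction].
  exact (proj2_sig (constructive_indefinite_description _ h')).
Qed.
Definition kk (u : unit_interval) : baire :=
  match excluded_middle_informative (D2 u) with
  | left h => proj1_sig (constructive_indefinite_description _ h)
  | right _ => fun _ => 0%nat end.
Lemma kk_spec u : D2 u -> proj1_sig u = e (cc (kk u)).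
Proof.
  intro h. unfold kk. destruct (excluded_middle_informative (D2 u)) as [h'|h']; [|contradiction].
  exact (proj2_sig (constructive_indefinite_description _ h')).
Qed.

Lemma D1_borel : borel ui_dist D1.
Proof.
  apply borel_ext with (fun t => ~ gap t).
  - apply borel_compl, borel_open. intros t ht. destruct (gap_open t ht) as [r [hr h]].
    exists r; split; auto.
  - intro t. unfold gap, D1. tauto.
Qed.

Lemma rr_cont t : D1 t -> forall eps, 0 < eps -> exists del, 0 < del /\
   forall t', D1 t' -> ui_dist t t' < del -> cantor_dist (rr t) (rr t') < eps.
Proof.
  intros h eps he. destruct (arch_inv eps he) as [N hN]. exists (q4 ^ N). split; [apply q4_pos|].
  intros t' h' hd. unfold ui_dist in hd. rewrite <- (rr_spec t h), <- (rr_spec t' h') in hd.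
  apply e_sep in hd. eapply Rle_lt_trans; [apply bd_agree; exact hd|exact hN].
Qed.

Lemma D2_borel : borel ui_dist D2.
Proof.
  apply borel_ext with (fun u => D1 u /\ crange (rr u)).
  - apply (borel_preimage ui_dist cantor_dist D1 rr ui_metric D1_borel rr_cont crange crange_borel).
  - intro u. split.
    + intros [h1 h2]. apply crange_iff in h2. destruct h2 as [y hy]. exists y.
      rewrite hy. symmetry; apply rr_spec; auto.
    + intros [y hy]. assert (h1 : D1 u) by (exists (cc y); auto). split; auto.
      apply crange_iff. exists y. apply e_inj. rewrite rr_spec; auto.
Qed.

Lemma fst_cont {X Y} (dX : X -> X -> R) (dY : Y -> Y -> R) : metric_continuous (prod_dist dX dY) dX fst.
Proof. intros p eps he. exists eps; split; auto. intros p' h. apply prod_dist_l in h; auto. Qed.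
Lemma snd_cont {X Y} (dX : X -> X -> R) (dY : Y -> Y -> R) : metric_continuous (prod_dist dX dY) dY snd.
Proof. intros p eps he. exists eps; split; auto. intros p' h. apply prod_dist_r in h; auto. Qed.

Lemma FB_graph_borel : borel (prod_dist ui_dist ui_dist) (mv_graph FB).
Proof.
  set (Dom := fun p : unit_interval * unit_interval => D1 (fst p) /\ D2 (snd p)).
  set (phi := fun p : unit_interval * unit_interval => (rr (fst p), kk (snd p))).
  assert (mP : is_metric (prod_dist ui_dist ui_dist)) by (apply prod_metric; apply ui_metric).
  assert (hDom : borel (prod_dist ui_dist ui_dist) Dom).
  { apply borel_inter2.
    - apply (borel_preimage_total _ ui_dist fst mP (fst_cont _ _) D1 D1_borel).
    - apply (borel_preimage_total _ ui_dist snd mP (snd_cont _ _) D2 D2_borel). }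
  assert (hphi : forall z, Dom z -> forall eps, 0 < eps -> exists del, 0 < del /\
      forall z', Dom z' -> prod_dist ui_dist ui_dist z z' < del ->
        prod_dist cantor_dist baire_dist (phi z) (phi z') < eps).
  { intros [t u] [h1 h2] eps he. simpl in h1, h2.
    destruct (rr_cont t h1 eps he) as [d1 [hd1 Hd1]].
    destruct (arch_inv eps he) as [N hN].
    exists (Rmin d1 (q4 ^ (bnd2 (kk u) N))). split; [apply Rmin_glb_lt; auto; apply q4_pos|].
    intros [t' u'] [h1' h2'] hd. simpl in h1', h2'.
    pose proof (prod_dist_l _ _ _ _ _ hd) as a1. pose proof (prod_dist_r _ _ _ _ _ hd) as a2. simpl in a1, a2.
    pose proof (Rmin_l d1 (q4 ^ (bnd2 (kk u) N))). pose proof (Rmin_r d1 (q4 ^ (bnd2 (kk u) N))).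
    unfold prod_dist, phi; simpl. apply Rmax_lub_lt.
    - apply Hd1; auto; lra.
    - assert (a3 : ui_dist u u' < q4 ^ bnd2 (kk u) N) by lra. unfold ui_dist in a3.
      rewrite (kk_spec u h2), (kk_spec u' h2') in a3. apply e_sep, cc_inv in a3.
      eapply Rle_lt_trans; [apply bd_agree; exact a3|exact hN]. }
  pose proof (borel_preimage _ _ Dom phi mP hDom hphi (mv_graph FA) (FF_graph_borel QD QD_closed)) as hG2.
  apply borel_ext with (fun p : unit_interval * unit_interval => gap (fst p) \/ (Dom p /\ mv_graph FA (phi p))).
  - apply borel_union2; auto. apply borel_open. intros p hp. destruct (gap_open _ hp) as [r [hr h]].
    exists r. split; auto. intros p' hd. apply h. apply prod_dist_l in hd. exact hd.
  - intros [t u]. unfold mv_graph, FB, Dom, phi; simpl. split.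
    + intros [h|[[h1 h2] h3]]; [left; auto|right]. exists (rr t), (kk u). repeat split; auto.
      * apply rr_spec; auto.
      * apply kk_spec; auto.
    + intros [h|[x [y [h1 [h2 h3]]]]]; [left; auto|right].
      assert (hD1 : D1 t) by (exists x; auto). assert (hD2 : D2 u) by (exists y; auto).
      assert (ex : rr t = x) by (apply e_inj; rewrite rr_spec; auto).
      assert (ey : kk u = y) by (apply cc_inj, e_inj; rewrite <- kk_spec; auto).
      rewrite ex, ey. repeat split; auto.
Qed.

Theorem partB : exists F : unit_interval -> unit_interval -> Prop,
     multi_valued F /\
     borel (prod_dist ui_dist ui_dist) (mv_graph F) /\
     analytic ui_dist (mv_continuity_points ui_dist ui_dist F) /\
     ~ borel ui_dist (mv_continuity_points ui_dist ui_dist F).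
Proof.
  exists FB. split; [apply FB_mv|split; [apply FB_graph_borel|split; [apply FB_analytic|apply FB_not_borel]]].
Qed.


Theorem theorem2p9 :
  (exists F : cantor -> baire -> Prop,
     multi_valued F /\
     (forall x, closed_in baire_dist (F x)) /\
     borel (prod_dist cantor_dist baire_dist) (mv_graph F) /\
     analytic cantor_dist (mv_continuity_points cantor_dist baire_dist F) /\
     ~ borel cantor_dist (mv_continuity_points cantor_dist baire_dist F))
  /\
  (exists F : unit_interval -> unit_interval -> Prop,
     multi_valued F /\
     borel (prod_dist ui_dist ui_dist) (mv_graph F) /\
     analytic ui_dist (mv_continuity_points ui_dist ui_dist F) /\
     ~ borel ui_dist (mv_continuity_points ui_dist ui_dist F)).
Proof.
  split; [exact partA|exact partB].
Qed.
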